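(* Let $(X,\le)$ be a partially ordered set in which every two elements have a supremum (join). Then: (a) for every directed $D\subset X$ the set $(\downarrow D)^\uparrow$ is directed, where for $A\subset X$, $A^\uparrow$ is the set of suprema of those directed subsets of $A$ that have a supremum in $X$; consequently $\widehat D$ is directed for every directed $D\subset X$; (b) the enhanced directed completion $\overline X_o$ of $X$ is a complete lattice; (c) the collection $\overline X^{\sf j}$ of all $A\subset X$ which are lower sets and contain the supremum of every subset of $A$ having a supremum in $X$ coincides with the collection $\{A\subset X: A=\widehat A,\ A\text{ directed}\}$ if $X$ has a minimum, and with this collection together with the empty set if $X$ has no minimum. In particular $\overline X^{\sf j}$ ordered by inclusion, with the map $x\mapsto\downarrow x$, is (order-isomorphic to) the enhanced directed completion of $X$.
   Context: Let $(X,\le)$ be a partially ordered set. A subset $D\subset X$ is directed if every finite subset of $D$ (including the empty one) has an upper bound in $D$; in particular directed sets are nonempty. $A\subset X$ is a lower set if $x\in A$ and $y\le x$ imply $y\in A$; $\downarrow A:=\{x\in X:x\le a\text{ for some }a\in A\}$ and $\downarrow x:=\downarrow\{x\}$. $(X,\le)$ is a directed complete partial order (dcpo) if every directed subset has a supremum. A subset $A\subset X$ is directed-sup-closed if the supremum of every directed $D\subset A$ which has a supremum in $X$ belongs to $A$. For $A\subset X$, $\widehat A$ is the smallest subset of $X$ containing $A$ which is both a lower set and directed-sup-closed. A map $T:X_1\to X_2$ between partially ordered sets has the Monotone Convergence Property (Mcp) if for every directed $D\subset X_1$ having a supremum, $T(D)$ has a supremum and $T(\sup D)=\sup T(D)$.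 A directed completion of $(X,\le)$ is a dcpo $(\overline X,\bar\le)$ together with a map $\iota:X\to\overline X$ with the Mcp such that for every dcpo $Z$ and every map $T:X\to Z$ with the Mcp there is a unique map $\bar T:\overline X\to Z$ with the Mcp satisfying $\bar T\circ\iota=T$. The enhanced directed completion $\overline X_o$ is $\overline X$ if $X$ has a minimum, and otherwise $\overline X$ with one new element added which is declared smaller than all others. A complete lattice is a partially ordered set in which every subset has a supremum and an infimum. *)

(* Defs.v *)
From Stdlib Require Import List.

Section PosetDefs.
Variable X : Type.
Variable le : X -> X -> Prop.

Definition is_poset : Prop :=
  (forall x, le x x) /\
  (forall x y, le x y -> le y x -> x = y) /\
  (forall x y z, le x y -> le y z -> le x z).

Definition subset (A B : X -> Prop) : Prop := forall x, A x -> B x.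
Definition set_eq (A B : X -> Prop) : Prop := forall x, A x <-> B x.

Definition is_sup (S : X -> Prop) (s : X) : Prop :=
  (forall x, S x -> le x s) /\ (forall u, (forall x, S x -> le x u) -> le s u).

Definition is_inf (S : X -> Prop) (s : X) : Prop :=
  (forall x, S x -> le s x) /\ (forall u, (forall x, S x -> le u x) -> le u s).

Definition directed (D : X -> Prop) : Prop :=
  forall l : list X, (forall x, In x l -> D x) ->
    exists u, D u /\ forall x, In x l -> le x u.

Definition lower_set (A : X -> Prop) : Prop :=
  forall x y, A x -> le y x -> A y.

Definition down (A : X -> Prop) : X -> Prop :=
  fun x => exists a, A a /\ le x a.

Definition down1 (a : X) : X -> Prop := fun x => le x a.

Definition dcpo : Prop :=
  is_poset /\ forall D, directed D -> exists s, is_sup D s.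

Definition dsup_closed (A : X -> Prop) : Prop :=
  forall D s, subset D A -> directed D -> is_sup D s -> A s.

Definition hat (A : X -> Prop) : X -> Prop :=
  fun x => forall B, subset A B -> lower_set B -> dsup_closed B -> B x.

Definition up (A : X -> Prop) : X -> Prop :=
  fun s => exists D, subset D A /\ directed D /\ is_sup D s.

Definition has_min : Prop := exists m, forall x, le m x.

Definition has_binary_sups : Prop :=
  forall a b, exists s, is_sup (fun z => z = a \/ z = b) s.

Definition complete_lattice : Prop :=
  is_poset /\ forall S : X -> Prop, (exists s, is_sup S s) /\ (exists i, is_inf S i).

Definition Xj (A : X -> Prop) : Prop :=
  lower_set A /\ forall S s, subset S A -> is_sup S s -> A s.

End PosetDefs.

Arguments subset {X}. Arguments set_eq {X}.

Definition image {X Z : Type} (T : X -> Z) (D : X -> Prop) : Z -> Prop :=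
  fun z => exists d, D d /\ z = T d.

Definition Mcp {X Z : Type} (leX : X -> X -> Prop) (leZ : Z -> Z -> Prop)
  (T : X -> Z) : Prop :=
  forall D s, directed X leX D -> is_sup X leX D s ->
    is_sup Z leZ (image T D) (T s).

Definition is_directed_completion {X Y : Type} (leX : X -> X -> Prop)
  (leY : Y -> Y -> Prop) (iota : X -> Y) : Prop :=
  dcpo Y leY /\ Mcp leX leY iota /\
  forall (Z : Type) (leZ : Z -> Z -> Prop), dcpo Z leZ ->
    forall T : X -> Z, Mcp leX leZ T ->
      exists Tb : Y -> Z, Mcp leY leZ Tb /\ (forall x, Tb (iota x) = T x) /\
        forall Tb' : Y -> Z, Mcp leY leZ Tb' -> (forall x, Tb' (iota x) = T x) ->
          forall y, Tb' y = Tb y.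

(* order on Y with a new bottom element None adjoined *)
Definition enh_le {Y : Type} (leY : Y -> Y -> Prop) (a b : option Y) : Prop :=
  match a, b with
  | None, _ => True
  | Some _, None => False
  | Some a', Some b' => leY a' b'
  end.

Definition iso_onto_Xj {X W : Type} (leX : X -> X -> Prop) (leW : W -> W -> Prop)
  (j : X -> W) (phi : W -> X -> Prop) : Prop :=
  (forall w, Xj X leX (phi w)) /\
  (forall A, Xj X leX A -> exists w, set_eq (phi w) A) /\
  (forall a b, leW a b <-> subset (phi a) (phi b)) /\
  (forall x, set_eq (phi (j x)) (down1 X leX x)).

(* Main.v *)
Require Import Defs.
From Stdlib Require Import List Classical FunctionalExtensionality PropExtensionality ProofIrrelevance IndefiniteDescription.

Section Gen.
Variable X : Type.
Variable le : X -> X -> Prop.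

Lemma le_refl (Hpo : is_poset X le) x : le x x. Proof. destruct Hpo as [H _]; auto. Qed.
Lemma le_anti (Hpo : is_poset X le) x y : le x y -> le y x -> x = y. Proof. destruct Hpo as [_ [H _]]; auto. Qed.
Lemma le_trans (Hpo : is_poset X le) x y z : le x y -> le y z -> le x z. Proof. destruct Hpo as [_ [_ H]]; eauto. Qed.

Lemma sup_unique (Hpo : is_poset X le) S s t : is_sup X le S s -> is_sup X le S t -> s = t.
Proof. intros [H1 H2] [H3 H4]. apply (le_anti Hpo); [apply H2|apply H4]; assumption. Qed.

Lemma is_sup_ext S S' s : (forall x, S x <-> S' x) -> is_sup X le S s -> is_sup X le S' s.
Proof. intros E [H1 H2]; split; [intros x Hx; apply H1, E, Hx | intros u Hu; apply H2; intros x Hx; apply Hu, E, Hx]. Qed.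

Lemma directed_ne D : directed X le D -> exists d, D d.
Proof. intros H. destruct (H nil) as [u [Hu _]]; [intros x []|]. eauto. Qed.

Lemma directed_2 D a b : directed X le D -> D a -> D b -> exists c, D c /\ le a c /\ le b c.
Proof. intros H Ha Hb. destruct (H (a :: b :: nil)) as [u [Hu Hl]].
  - intros x [<-|[<-|[]]]; auto.
  - exists u; split; [auto|split]; apply Hl; simpl; auto. Qed.

Lemma directed_pair (Hpo : is_poset X le) D : (exists d, D d) -> (forall a b, D a -> D b -> exists c, D c /\ le a c /\ le b c) -> directed X le D.
Proof.
  intros [d Hd] Hp l. induction l as [|a l IH]; intros Hl.
  - exists d; split; [auto | intros x []].
  - destruct IH as [u [Hu Hul]]. { intros x Hx; apply Hl; simpl; auto. }
    destruct (Hp a u) as [c [Hc [Hac Huc]]]; [apply Hl; simpl; auto | auto |].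
    exists c; split; auto. intros x [<-|Hx]; auto. eapply (le_trans Hpo); eauto.
Qed.

Lemma singleton_directed (Hpo : is_poset X le) x : directed X le (fun z => z = x).
Proof. apply (directed_pair Hpo); [eauto|]. intros a b -> ->. exists x; split; auto; split; apply (le_refl Hpo). Qed.
Lemma singleton_sup (Hpo : is_poset X le) x : is_sup X le (fun z => z = x) x.
Proof. split; [intros z ->; apply (le_refl Hpo) | intros u Hu; apply Hu; auto]. Qed.

Lemma hat_incl A : subset A (hat X le A). Proof. intros x Hx B HB _ _; auto. Qed.
Lemma hat_lower A : lower_set X le (hat X le A).
Proof. intros x y Hx Hy B H1 H2 H3. apply (H2 x y); auto. apply Hx; auto. Qed.
Lemma hat_dsup A : dsup_closed X le (hat X le A).
Proof. intros D s HD Hd Hs B H1 H2 H3. apply (H3 D s); auto. intros x Hx; apply HD; auto. Qed.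
Lemma hat_min A B : subset A B -> lower_set X le B -> dsup_closed X le B -> subset (hat X le A) B.
Proof. intros H1 H2 H3 x Hx; apply Hx; auto. Qed.

Lemma pair_dir_sup (Hpo : is_poset X le) a b : le a b ->
  directed X le (fun z => z = a \/ z = b) /\ is_sup X le (fun z => z = a \/ z = b) b.
Proof.
  intros Hab. split.
  - apply (directed_pair Hpo); [eauto|]. intros x y Hx Hy. exists b; split; auto.
    destruct Hx as [->| ->], Hy as [->| ->]; split; auto; apply (le_refl Hpo).
  - split; [intros z [->| ->]; auto; apply (le_refl Hpo) | intros u Hu; apply Hu; auto].
Qed.
End Gen.

Lemma Mcp_mono {A B : Type} (leA : A -> A -> Prop) (leB : B -> B -> Prop) (HA : is_poset A leA) T :
  Mcp leA leB T -> forall a b, leA a b -> leB (T a) (T b).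
Proof.
  intros H a b Hab. destruct (pair_dir_sup A leA HA a b Hab) as [Hd Hs].
  destruct (H _ _ Hd Hs) as [H1 _]. apply H1. exists a; auto.
Qed.

Lemma image_directed {A B : Type} (leA : A -> A -> Prop) (leB : B -> B -> Prop) (HB : is_poset B leB) T :
  (forall a b, leA a b -> leB (T a) (T b)) -> forall D, directed A leA D -> directed B leB (image T D).
Proof.
  intros Hm D HD. apply (directed_pair B leB HB).
  - destruct (directed_ne _ _ _ HD) as [d Hd]. exists (T d), d; auto.
  - intros x y [a [Ha ->]] [b [Hb ->]]. destruct (directed_2 _ _ _ _ _ HD Ha Hb) as [c [Hc [H1 H2]]].
    exists (T c); split; [exists c; auto | split; auto].
Qed.

Lemma Mcp_id {A : Type} (leA : A -> A -> Prop) : Mcp leA leA (fun y => y).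
Proof. intros D s HD Hs. apply (is_sup_ext _ _ D); auto. intros x; split; [intros; exists x; auto | intros [d [Hd ->]]; auto]. Qed.

Lemma Mcp_comp {A B C : Type} (leA : A -> A -> Prop) (leB : B -> B -> Prop) (leC : C -> C -> Prop)
  (HA : is_poset A leA) (HB : is_poset B leB) f g :
  Mcp leA leB f -> Mcp leB leC g -> Mcp leA leC (fun a => g (f a)).
Proof.
  intros Hf Hg D s HD Hs. pose proof (Hf D s HD Hs) as H1.
  pose proof (image_directed leA leB HB f (Mcp_mono leA leB HA f Hf) D HD) as H2.
  pose proof (Hg _ _ H2 H1) as H3. apply (is_sup_ext _ _ (image g (image f D))); auto.
  intros x; split.
  - intros [y [[d [Hd ->]] ->]]. exists d; auto.
  - intros [d [Hd ->]]. exists (f d); split; auto. exists d; auto.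
Qed.

Section Join.
Variable X : Type.
Variable le : X -> X -> Prop.
Hypothesis Hpo : is_poset X le.
Hypothesis Hjoin : has_binary_sups X le.

Definition jsup x y j := is_sup X le (fun z => z = x \/ z = y) j.
Lemma join_ub1 x y j : jsup x y j -> le x j. Proof. intros [H _]; apply H; auto. Qed.
Lemma join_ub2 x y j : jsup x y j -> le y j. Proof. intros [H _]; apply H; auto. Qed.
Lemma join_least x y j u : jsup x y j -> le x u -> le y u -> le j u.
Proof. intros [_ H] H1 H2; apply H; intros z [->| ->]; auto. Qed.
Lemma jsup_sym x y j : jsup x y j -> jsup y x j.
Proof. apply is_sup_ext. intros z; tauto. Qed.

Lemma join_dir (E1 E2 : X -> Prop) s1 s2 j : directed X le E1 -> directed X le E2 ->
  is_sup X le E1 s1 -> is_sup X le E2 s2 -> jsup s1 s2 j ->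
  directed X le (fun z => exists e1 e2, E1 e1 /\ E2 e2 /\ jsup e1 e2 z) /\
  is_sup X le (fun z => exists e1 e2, E1 e1 /\ E2 e2 /\ jsup e1 e2 z) j.
Proof.
  intros HD1 HD2 Hs1 Hs2 Hj.
  destruct (directed_ne _ _ _ HD1) as [a1 Ha1]. destruct (directed_ne _ _ _ HD2) as [a2 Ha2].
  split.
  - apply (directed_pair _ _ Hpo).
    + destruct (Hjoin a1 a2) as [z Hz]. exists z, a1, a2; auto.
    + intros z z' [e1 [e2 [He1 [He2 Hz]]]] [e1' [e2' [He1' [He2' Hz']]]].
      destruct (directed_2 _ _ _ _ _ HD1 He1 He1') as [c1 [Hc1 [Hc11 Hc12]]].
      destruct (directed_2 _ _ _ _ _ HD2 He2 He2') as [c2 [Hc2 [Hc21 Hc22]]].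
      destruct (Hjoin c1 c2) as [c Hc].
      exists c; split; [exists c1, c2; auto|split].
      * apply (join_least _ _ _ _ Hz); eapply (le_trans _ _ Hpo); eauto; [apply (join_ub1 _ _ _ Hc)|apply (join_ub2 _ _ _ Hc)].
      * apply (join_least _ _ _ _ Hz'); eapply (le_trans _ _ Hpo); eauto; [apply (join_ub1 _ _ _ Hc)|apply (join_ub2 _ _ _ Hc)].
  - split.
    + intros z [e1 [e2 [He1 [He2 Hz]]]]. apply (join_least _ _ _ _ Hz).
      * eapply (le_trans _ _ Hpo); [apply (proj1 Hs1); eauto| apply (join_ub1 _ _ _ Hj)].
      * eapply (le_trans _ _ Hpo); [apply (proj1 Hs2); eauto| apply (join_ub2 _ _ _ Hj)].
    + intros u Hu. apply (join_least _ _ _ _ Hj).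
      * apply (proj2 Hs1). intros e1 He1. destruct (Hjoin e1 a2) as [z Hz].
        eapply (le_trans _ _ Hpo); [apply (join_ub1 _ _ _ Hz)|]. apply Hu. exists e1, a2; auto.
      * apply (proj2 Hs2). intros e2 He2. destruct (Hjoin a1 e2) as [z Hz].
        eapply (le_trans _ _ Hpo); [apply (join_ub2 _ _ _ Hz)|]. apply Hu. exists a1, e2; auto.
Qed.

Lemma GL (P : X -> Prop) x : lower_set X le P -> dsup_closed X le P ->
  lower_set X le (fun y => forall j, jsup x y j -> P j) /\
  dsup_closed X le (fun y => forall j, jsup x y j -> P j).
Proof.
  intros HL HD. split.
  - intros y y' Hy Hy' j' Hj'. destruct (Hjoin x y) as [j Hj].
    apply (HL j); [apply Hy; auto|]. apply (join_least _ _ _ _ Hj'); [apply (join_ub1 _ _ _ Hj)|].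
    eapply (le_trans _ _ Hpo); eauto. apply (join_ub2 _ _ _ Hj).
  - intros E s HE Hd Hs j Hj.
    destruct (join_dir (fun z => z = x) E x s j (singleton_directed _ _ Hpo x) Hd (singleton_sup _ _ Hpo x) Hs Hj) as [H1 H2].
    refine (HD _ j _ H1 H2). intros z [e1 [e2 [-> [He2 Hz]]]]. apply (HE e2 He2); auto.
Qed.

Lemma hat_join D : directed X le D -> forall x y, hat X le D x -> hat X le D y -> forall j, jsup x y j -> hat X le D j.
Proof.
  intros HD.
  assert (step1 : forall x, D x -> forall y, hat X le D y -> forall j, jsup x y j -> hat X le D j).
  { intros x Hx. destruct (GL (hat X le D) x (hat_lower _ _ D) (hat_dsup _ _ D)) as [L1 L2].
    intros y0 Hy0; refine (hat_min _ _ D (fun y => forall j, jsup x y j -> hat X le D j) _ L1 L2 y0 Hy0).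
    intros y Hy j Hj.
    destruct (directed_2 _ _ _ _ _ HD Hx Hy) as [c [Hc [H1 H2]]].
    apply (hat_lower _ _ D c); [apply hat_incl; auto|]. apply (join_least _ _ _ _ Hj); auto. }
  intros x y Hx Hy.
  destruct (GL (hat X le D) y (hat_lower _ _ D) (hat_dsup _ _ D)) as [L1 L2].
  assert (H : subset (hat X le D) (fun x => forall j, jsup y x j -> hat X le D j)).
  { refine (hat_min _ _ D _ _ L1 L2). intros x' Hx' j Hj. apply (step1 x' Hx' y Hy j). apply jsup_sym; auto. }
  intros j Hj. apply (H x Hx j). apply jsup_sym; auto.
Qed.

Lemma hat_directed D : directed X le D -> directed X le (hat X le D).
Proof.
  intros HD. apply (directed_pair _ _ Hpo).
  - destruct (directed_ne _ _ _ HD) as [d Hd]. exists d; apply hat_incl; auto.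
  - intros a b Ha Hb. destruct (Hjoin a b) as [j Hj]. exists j; split; [apply (hat_join D HD a b Ha Hb j Hj)|].
    split; [apply (join_ub1 _ _ _ Hj)|apply (join_ub2 _ _ _ Hj)].
Qed.

Lemma up_down_directed D : directed X le D -> directed X le (up X le (down X le D)).
Proof.
  intros HD. apply (directed_pair _ _ Hpo).
  - destruct (directed_ne _ _ _ HD) as [d Hd]. exists d, (fun z => z = d). split; [|split].
    + intros z ->. exists d; split; auto; apply (le_refl _ _ Hpo).
    + apply (singleton_directed _ _ Hpo).
    + apply (singleton_sup _ _ Hpo).
  - intros s1 s2 [E1 [HE1 [HD1 Hs1]]] [E2 [HE2 [HD2 Hs2]]].
    destruct (Hjoin s1 s2) as [j Hj].
    destruct (join_dir E1 E2 s1 s2 j HD1 HD2 Hs1 Hs2 Hj) as [H1 H2].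
    exists j; split; [|split; [apply (join_ub1 _ _ _ Hj)|apply (join_ub2 _ _ _ Hj)]].
    eexists; split; [|split; [apply H1|apply H2]].
    intros z [e1 [e2 [He1 [He2 Hz]]]].
    destruct (HE1 e1 He1) as [a1 [Ha1 Hea1]]. destruct (HE2 e2 He2) as [a2 [Ha2 Hea2]].
    destruct (directed_2 _ _ _ _ _ HD Ha1 Ha2) as [c [Hc [Hc1 Hc2]]].
    exists c; split; auto. apply (join_least _ _ _ _ Hz); eapply (le_trans _ _ Hpo); eauto.
Qed.

Lemma Xj_directed A : Xj X le A -> (exists x, A x) -> directed X le A.
Proof.
  intros [HL HS] Hne. apply (directed_pair _ _ Hpo); auto.
  intros a b Ha Hb. destruct (Hjoin a b) as [j Hj]. exists j; split.
  - apply (HS (fun z => z = a \/ z = b) j); auto. intros z [->| ->]; auto.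
  - split; [apply (join_ub1 _ _ _ Hj)|apply (join_ub2 _ _ _ Hj)].
Qed.

Lemma Xj_hat A : Xj X le A -> set_eq A (hat X le A).
Proof.
  intros [HL HS] x; split; [apply hat_incl|].
  apply (hat_min _ _ A A); auto. intros y Hy; auto. intros D s HD _ Hs; apply (HS D s); auto.
Qed.

Lemma sup_one x : is_sup X le (fun w => In w (x :: nil)) x.
Proof. split; [intros z [<-|[]]; apply (le_refl _ _ Hpo) | intros u Hu; apply Hu; simpl; auto]. Qed.

Lemma list_sup l : forall a, exists s, is_sup X le (fun z => In z (a :: l)) s.
Proof.
  induction l as [|b l IH]; intros a.
  - exists a; apply sup_one.
  - destruct (IH b) as [t Ht]. destruct (Hjoin a t) as [j Hj]. exists j; split.
    + intros z [<-|Hz]; [apply (join_ub1 _ _ _ Hj)|].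
      eapply (le_trans _ _ Hpo); [apply (proj1 Ht); exact Hz| apply (join_ub2 _ _ _ Hj)].
    + intros u Hu. apply (join_least _ _ _ _ Hj); [apply Hu; simpl; auto|].
      apply (proj2 Ht). intros z Hz. apply Hu; simpl; auto.
Qed.

Lemma hat_dir_Xj A : set_eq A (hat X le A) -> directed X le A -> Xj X le A.
Proof.
  intros He HD.
  assert (HL : lower_set X le A).
  { intros x y Hx Hy. apply He. apply (hat_lower _ _ A x); auto. apply He; auto. }
  split; auto.
  intros S s HS Hs. destruct (classic (exists x, S x)) as [[x0 Hx0]|Hn].
  - set (F := fun z => exists a l, S a /\ (forall x, In x l -> S x) /\ is_sup X le (fun w => In w (a :: l)) z).
    assert (HFA : subset F A).
    { intros z [a [l [Ha [Hl Hz]]]]. destruct (HD (a :: l)) as [u [Hu Hul]].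
      - intros x [<-|Hx]; apply HS; auto.
      - apply (HL u); auto. apply (proj2 Hz); auto. }
    assert (HFd : directed X le F).
    { apply (directed_pair _ _ Hpo).
      - exists x0, x0, nil; split; auto; split; [intros x []|apply sup_one].
      - intros z1 z2 [a1 [l1 [Ha1 [Hl1 Hz1]]]] [a2 [l2 [Ha2 [Hl2 Hz2]]]].
        destruct (list_sup (l1 ++ a2 :: l2) a1) as [t Ht]. exists t; split; [|split].
        + exists a1, (l1 ++ a2 :: l2); split; auto; split; auto.
          intros x Hx. destruct (in_app_or _ _ _ Hx) as [H|[<-|H]]; auto.
        + apply (proj2 Hz1). intros x Hx. apply (proj1 Ht).
          destruct Hx as [<-|Hx]; [simpl; auto|right; apply in_or_app; auto].
        + apply (proj2 Hz2). intros x Hx. apply (proj1 Ht). right; apply in_or_app; right; auto. }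
    assert (HFs : is_sup X le F s).
    { split.
      - intros z [a [l [Ha [Hl Hz]]]]. apply (proj2 Hz). intros x [<-|Hx]; apply (proj1 Hs); auto.
      - intros u Hu. apply (proj2 Hs). intros x Hx. apply Hu. exists x, nil; split; auto; split; [intros y []|apply sup_one]. }
    apply He. apply (hat_dsup _ _ A F s); auto. intros z Hz; apply hat_incl; auto.
  - destruct (directed_ne _ _ _ HD) as [a Ha]. apply (HL a); auto.
    apply (proj2 Hs). intros x Hx; exfalso; eauto.
Qed.

Lemma Xj_empty_nomin : ~ has_min X le -> Xj X le (fun _ => False).
Proof.
  intros Hn. split; [intros x y []|]. intros S s HS Hs. apply Hn. exists s. intros x.
  apply (proj2 Hs). intros z Hz; destruct (HS z Hz).
Qed.

Lemma Xj_min_ne A : has_min X le -> Xj X le A -> exists x, A x.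
Proof.
  intros [m Hm] [HL HS]. exists m. apply (HS (fun _ => False) m); [intros z []|].
  split; [intros z []|intros u _; auto].
Qed.
End Join.

Section Compl.
Variable X : Type.
Variable le : X -> X -> Prop.
Hypothesis Hpo : is_poset X le.
Hypothesis Hjoin : has_binary_sups X le.

Definition PZ (A : X -> Prop) := Xj X le A /\ exists x, A x.
Definition Z := {A : X -> Prop | PZ A}.
Definition leZ (a b : Z) := subset (proj1_sig a) (proj1_sig b).

Lemma Z_ext (a b : Z) : set_eq (proj1_sig a) (proj1_sig b) -> a = b.
Proof.
  destruct a as [A pa], b as [B pb]; simpl; intros H.
  assert (A = B) by (extensionality x; apply propositional_extensionality; auto).
  subst. f_equal; apply proof_irrelevance.
Qed.

Lemma Z_poset : is_poset Z leZ.
Proof.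
  split; [intros a x; auto|split].
  - intros a b H1 H2. apply Z_ext. intros x; split; auto.
  - intros a b c H1 H2 x Hx; auto.
Qed.

Lemma Z_sup (DD : Z -> Prop) : directed Z leZ DD ->
  exists s : Z, is_sup Z leZ DD s /\
    set_eq (proj1_sig s) (hat X le (fun x => exists a, DD a /\ proj1_sig a x)).
Proof.
  intros HD. set (U := fun x => exists a, DD a /\ proj1_sig a x).
  assert (HU : directed X le U).
  { apply (directed_pair _ _ Hpo).
    - destruct (directed_ne _ _ _ HD) as [a Ha]. destruct (proj2_sig a) as [_ [x Hx]]. exists x, a; auto.
    - intros x y [a [Ha Hx]] [b [Hb Hy]].
      destruct (directed_2 _ _ _ _ _ HD Ha Hb) as [c [Hc [Hac Hbc]]].
      destruct (proj2_sig c) as [Hcj Hcne].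
      destruct (directed_2 _ _ _ _ _ (Xj_directed X le Hpo Hjoin _ Hcj Hcne) (Hac x Hx) (Hbc y Hy)) as [z [Hz Hxz]].
      exists z; split; auto. exists c; auto. }
  assert (HP : PZ (hat X le U)).
  { split.
    - apply (hat_dir_Xj X le Hpo Hjoin).
      + intros x; split; [apply hat_incl|]. apply (hat_min _ _ _ _ (fun y H => H)); [apply hat_lower|apply hat_dsup].
      + apply (hat_directed X le Hpo Hjoin); auto.
    - destruct (directed_ne _ _ _ HU) as [x Hx]. exists x; apply hat_incl; auto. }
  exists (exist _ (hat X le U) HP). split; [|intros x; simpl; tauto].
  split.
  - intros a Ha x Hx. simpl. apply hat_incl. exists a; auto.
  - intros u Hu. unfold leZ; simpl. destruct (proj2_sig u) as [[HL HS] _].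
    apply hat_min; auto.
    + intros x [a [Ha Hx]]. apply (Hu a Ha); auto.
    + intros D s HDs _ Hs. apply (HS D s); auto.
Qed.

Lemma Z_dcpo : dcpo Z leZ.
Proof. split; [apply Z_poset|]. intros D HD. destruct (Z_sup D HD) as [s [Hs _]]; eauto. Qed.

Lemma PZ_down1 x : PZ (down1 X le x).
Proof.
  split; [split|].
  - intros a b Ha Hb. unfold down1 in *. eapply (le_trans _ _ Hpo); eauto.
  - intros S s HS Hs. apply (proj2 Hs). auto.
  - exists x. apply (le_refl _ _ Hpo).
Qed.

Definition Tmap x : Z := exist _ (down1 X le x) (PZ_down1 x).

Lemma Tmap_Mcp : Mcp le leZ Tmap.
Proof.
  intros D s HD Hs. split.
  - intros z [d [Hd ->]] y Hy. simpl in *. unfold down1 in *. eapply (le_trans _ _ Hpo); eauto. apply (proj1 Hs); auto.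
  - intros u Hu y Hy. simpl in Hy. unfold down1 in Hy. destruct (proj2_sig u) as [[HL HS] _].
    apply (HL s); auto. apply (HS D s); auto. intros d Hd. apply (Hu (Tmap d)); [exists d; auto|]. simpl; apply (le_refl _ _ Hpo).
Qed.

Lemma completion_iso (Y : Type) (leY : Y -> Y -> Prop) (iota : X -> Y) :
  is_directed_completion le leY iota ->
  exists phi : Y -> X -> Prop,
    (forall y, PZ (phi y)) /\ (forall A, PZ A -> exists y, set_eq (phi y) A) /\
    (forall a b, leY a b <-> subset (phi a) (phi b)) /\
    (forall x, set_eq (phi (iota x)) (down1 X le x)).
Proof.
  intros [HY [Hiota Huniv]]. pose proof (proj1 HY) as HYpo.
  pose proof (Mcp_mono le leY Hpo iota Hiota) as Hmono.
  assert (Gex : forall a : Z, exists y, is_sup Y leY (image iota (proj1_sig a)) y).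
  { intros a. destruct (proj2_sig a) as [Hj Hne]. apply (proj2 HY).
    apply (image_directed le leY HYpo iota Hmono). apply (Xj_directed X le Hpo Hjoin); auto. }
  set (G := fun a => proj1_sig (constructive_indefinite_description _ (Gex a))).
  assert (HG : forall a, is_sup Y leY (image iota (proj1_sig a)) (G a)).
  { intros a. exact (proj2_sig (constructive_indefinite_description _ (Gex a))). }
  clearbody G.
  assert (Gdir : forall a : Z, directed Y leY (image iota (proj1_sig a))).
  { intros a. destruct (proj2_sig a) as [Hj Hne].
    apply (image_directed le leY HYpo iota Hmono). apply (Xj_directed X le Hpo Hjoin); auto. }
  assert (G_mono : forall a b, leZ a b -> leY (G a) (G b)).
  { intros a b Hab. apply (proj2 (HG a)). intros z [x [Hx ->]]. apply (proj1 (HG b)). exists x; split; auto. }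
  destruct (Huniv Z leZ Z_dcpo Tmap Tmap_Mcp) as [Tb [HTb [HTbi _]]].
  pose proof (Mcp_mono leY leZ HYpo Tb HTb) as Tb_mono.
  assert (TbG : forall a, Tb (G a) = a).
  { intros a. pose proof (HTb _ _ (Gdir a) (HG a)) as H.
    apply (sup_unique _ _ Z_poset _ _ _ H). split.
    - intros z [y [[x [Hx ->]] ->]]. rewrite HTbi. intros w Hw. simpl in Hw.
      destruct (proj2_sig a) as [[HL _] _]. apply (HL x); auto.
    - intros u Hu x Hx. apply (Hu (Tmap x)); [|simpl; apply (le_refl _ _ Hpo)].
      exists (iota x); split; [exists x; auto|]. rewrite HTbi; auto. }
  assert (G_Mcp : Mcp leZ leY G).
  { intros DD S HD HS. destruct (Z_sup DD HD) as [s [Hs Hse]].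
    assert (S = s) by (apply (sup_unique _ _ Z_poset DD); auto). subst S.
    split.
    - intros z [a [Ha ->]]. apply G_mono. apply (proj1 Hs); auto.
    - intros u Hu. apply (proj2 (HG s)). intros w [x [Hx ->]].
      apply Hse in Hx.
      refine (hat_min _ _ _ (fun x => leY (iota x) u) _ _ _ x Hx).
      + intros y [a [Ha Hy]]. destruct HYpo as [_ [_ Htr]]. apply (Htr _ (G a)).
        * apply (proj1 (HG a)). exists y; auto.
        * apply Hu. exists a; auto.
      + intros y y' Hy Hy'. destruct HYpo as [_ [_ Htr]]. eapply Htr; [apply Hmono; eauto| auto].
      + intros E t HE HdE Ht. apply (proj2 (Hiota E t HdE Ht)). intros z [e [He ->]]. apply HE; auto. }
  assert (GTb : forall y, G (Tb y) = y).
  { destruct (Huniv Y leY HY iota Hiota) as [T0 [_ [_ Huniq]]].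
    intros y. transitivity (T0 y); [|symmetry; exact (Huniq (fun y => y) (Mcp_id leY) (fun x => eq_refl) y)].
    apply (Huniq (fun y => G (Tb y)) (Mcp_comp leY leZ leY HYpo Z_poset Tb G HTb G_Mcp)).
    intros x. rewrite HTbi. apply (sup_unique _ _ HYpo _ _ _ (HG (Tmap x))). split.
    - intros z [w [Hw ->]]. apply Hmono. exact Hw.
    - intros u Hu. apply Hu. exists x; split; auto. simpl; apply (le_refl _ _ Hpo). }
  exists (fun y => proj1_sig (Tb y)). split; [|split; [|split]].
  - intros y; exact (proj2_sig (Tb y)).
  - intros A HA. exists (G (exist _ A HA)). rewrite TbG. simpl. intros x; tauto.
  - intros a b; split.
    + intros H. apply Tb_mono; auto.
    + intros H. rewrite <- (GTb a), <- (GTb b). apply G_mono; auto.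
  - intros x. rewrite HTbi. simpl. intros y; tauto.
Qed.
End Compl.

Lemma CL (X W : Type) (le : X -> X -> Prop) (leW : W -> W -> Prop) (HW : is_poset W leW)
  (phi : W -> X -> Prop) :
  (forall w, Xj X le (phi w)) -> (forall A, Xj X le A -> exists w, set_eq (phi w) A) ->
  (forall a b, leW a b <-> subset (phi a) (phi b)) -> complete_lattice W leW.
Proof.
  intros H1 H2 H3. split; auto. intros S. split.
  - set (C := fun x => forall B, Xj X le B -> (forall w, S w -> subset (phi w) B) -> B x).
    assert (HC : Xj X le C).
    { split.
      - intros x y Hx Hy B HB HsB. destruct HB as [HL HS]. apply (HL x); auto. apply Hx; auto. split; auto.
      - intros T s HT Hs B HB HsB. destruct HB as [HL HS]. apply (HS T s); auto.
        intros x Hx. apply (HT x Hx); auto. split; auto. }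
    destruct (H2 C HC) as [w Hw]. exists w. split.
    + intros v Hv. apply H3. intros x Hx. apply Hw. intros B HB HsB. apply (HsB v); auto.
    + intros u Hu. apply H3. intros x Hx. apply Hw in Hx. apply Hx; auto.
      intros v Hv. apply H3; auto.
  - set (I := fun x => forall w, S w -> phi w x).
    assert (HI : Xj X le I).
    { split.
      - intros x y Hx Hy w Hw. destruct (H1 w) as [HL _]. apply (HL x); auto.
      - intros T s HT Hs w Hw. destruct (H1 w) as [_ HS]. apply (HS T s); auto.
        intros x Hx. apply HT; auto. }
    destruct (H2 I HI) as [w Hw]. exists w. split.
    + intros v Hv. apply H3. intros x Hx. apply Hw in Hx. apply Hx; auto.
    + intros u Hu. apply H3. intros x Hx. apply Hw. intros v Hv. apply (proj1 (H3 u v) (Hu v Hv)); auto.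
Qed.

Lemma opt_poset (Y : Type) (leY : Y -> Y -> Prop) : is_poset Y leY -> is_poset (option Y) (enh_le leY).
Proof.
  intros [Hr [Ha Ht]]. split; [|split].
  - intros [x|]; simpl; auto.
  - intros [x|] [y|]; simpl; try tauto. intros; f_equal; auto.
  - intros [x|] [y|] [z|]; simpl; try tauto. eauto.
Qed.

Definition optphi {X Y : Type} (phi : Y -> X -> Prop) (o : option Y) : X -> Prop :=
  match o with None => fun _ => False | Some y => phi y end.

Lemma opt_iso (X Y : Type) (le : X -> X -> Prop) (leY : Y -> Y -> Prop) (iota : X -> Y) (phi : Y -> X -> Prop) :
  ~ has_min X le ->
  (forall y, PZ X le (phi y)) -> (forall A, PZ X le A -> exists y, set_eq (phi y) A) ->
  (forall a b, leY a b <-> subset (phi a) (phi b)) ->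
  (forall x, set_eq (phi (iota x)) (down1 X le x)) ->
  iso_onto_Xj le (enh_le leY) (fun x => Some (iota x)) (optphi phi).
Proof.
  intros Hn H1 H2 H3 H4. split; [|split; [|split]].
  - intros [y|]; simpl; [apply (H1 y)|apply (Xj_empty_nomin X le Hn)].
  - intros A HA. destruct (classic (exists x, A x)) as [Hne|Hne].
    + destruct (H2 A (conj HA Hne)) as [y Hy]. exists (Some y); auto.
    + exists None. intros x; simpl; split; [tauto|intros Hx; apply Hne; eauto].
  - intros [a|] [b|]; simpl.
    + apply H3.
    + split; [tauto|]. intros H. destruct (H1 a) as [_ [x Hx]]. apply (H x Hx).
    + split; [intros _ x []|auto].
    + split; [intros _ x []|auto].
  - intros x; simpl; apply H4.
Qed.

Theorem mainTheorem5 (X : Type) (le : X -> X -> Prop)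
  (Hpo : is_poset X le) (Hjoin : has_binary_sups X le) :
  (* (a) *)
  (forall D, directed X le D ->
     directed X le (up X le (down X le D)) /\ directed X le (hat X le D)) /\
  (* (b) *)
  (forall (Y : Type) (leY : Y -> Y -> Prop) (iota : X -> Y),
     is_directed_completion le leY iota ->
     (has_min X le -> complete_lattice Y leY) /\
     (~ has_min X le -> complete_lattice (option Y) (enh_le leY))) /\
  (* (c) *)
  (has_min X le ->
     forall A, Xj X le A <->
       (set_eq A (hat X le A) /\ directed X le A)) /\
  (~ has_min X le ->
     forall A, Xj X le A <->
       ((set_eq A (hat X le A) /\ directed X le A) \/ (forall x, ~ A x))) /\
  (forall (Y : Type) (leY : Y -> Y -> Prop) (iota : X -> Y),
     is_directed_completion le leY iota ->
     (has_min X le -> exists phi : Y -> X -> Prop, iso_onto_Xj le leY iota phi) /\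
     (~ has_min X le -> exists phi : option Y -> X -> Prop,
          iso_onto_Xj le (enh_le leY) (fun x => Some (iota x)) phi)).
Proof.
  split; [|split; [|split; [|split]]].
  - intros D HD. split; [apply (up_down_directed X le Hpo Hjoin D HD)|apply (hat_directed X le Hpo Hjoin D HD)].
  - intros Y leY iota Hc. pose proof (proj1 (proj1 Hc)) as HYpo.
    destruct (completion_iso X le Hpo Hjoin Y leY iota Hc) as [phi [H1 [H2 [H3 H4]]]]. split.
    + intros Hm. apply (CL X Y le leY HYpo phi); auto.
      * intros w; apply (H1 w).
      * intros A HA. apply H2. split; auto. apply (Xj_min_ne X le A Hm HA).
    + intros Hn. destruct (opt_iso X Y le leY iota phi Hn H1 H2 H3 H4) as [K1 [K2 [K3 _]]].
      apply (CL X (option Y) le (enh_le leY) (opt_poset Y leY HYpo) (optphi phi)); auto.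
  - intros Hm A. split.
    + intros HA. split; [apply (Xj_hat X le A HA)|]. apply (Xj_directed X le Hpo Hjoin A HA). apply (Xj_min_ne X le A Hm HA).
    + intros [He Hd]. apply (hat_dir_Xj X le Hpo Hjoin A He Hd).
  - intros Hn A. split.
    + intros HA. destruct (classic (exists x, A x)) as [Hne|Hne].
      * left. split; [apply (Xj_hat X le A HA)|]. apply (Xj_directed X le Hpo Hjoin A HA Hne).
      * right. intros x Hx; apply Hne; eauto.
    + intros [[He Hd]|He].
      * apply (hat_dir_Xj X le Hpo Hjoin A He Hd).
      * split; [intros x y Hx; destruct (He x Hx)|]. intros S s HS Hs. exfalso. apply Hn. exists s.
        intros x. apply (proj2 Hs). intros z Hz. destruct (He z (HS z Hz)).
  - intros Y leY iota Hc.
    destruct (completion_iso X le Hpo Hjoin Y leY iota Hc) as [phi [H1 [H2 [H3 H4]]]]. split.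
    + intros Hm. exists phi. split; [|split; [|split]]; auto.
      * intros w; apply (H1 w).
      * intros A HA. apply H2. split; auto. apply (Xj_min_ne X le A Hm HA).
    + intros Hn. exists (optphi phi). apply (opt_iso X Y le leY iota phi Hn H1 H2 H3 H4).
Qed.
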